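(* Every bi-nested sequent that is provable in the calculus $\mathbf{C}_{\mathbf{IK}}$ is valid, i.e. if $S$ is provable in $\mathbf{C}_{\mathbf{IK}}$ then for every bi-relational model $\mathcal{M}=(W,\le,R,V)$ and every $w\in W$ we have $\mathcal{M},w\Vdash S$.
   Context: Formulas are generated by $A::=p\mid\bot\mid\top\mid A\wedge A\mid A\vee A\mid A\supset A\mid\Box A\mid\Diamond A$, with $p$ ranging over a countable set $\mathsf{At}$ of atoms. A bi-relational model is $\mathcal{M}=(W,\le,R,V)$ with $W\neq\emptyset$, $\le$ a reflexive transitive relation on $W$, $R$ a binary relation on $W$, and $V:W\to\wp(\mathsf{At})$ such that $x\le y$ implies $V(x)\subseteq V(y)$; moreover (FC) if $x\le x'$ and $xRz$ then there is $z'$ with $x'Rz'$ and $z\le z'$; (BC) if $xRz$ and $z\le z'$ then there is $x'$ with $x\le x'$ and $x'Rz'$. Forcing: $w\not\Vdash\bot$, $w\Vdash\top$, $w\Vdash p$ iff $p\in V(w)$; $\wedge,\vee$ pointwise; $w\Vdash B\supset C$ iff for all $w'\ge w$, $w'\Vdash B$ implies $w'\Vdash C$; $w\Vdash\Box B$ iff for all $w',v'$ with $w\le w'$ and $w'Rv'$, $v'\Vdash B$; $w\Vdash\Diamond B$ iff there is $v$ with $wRv$ and $v\Vdash B$. Bi-nested sequents: the empty sequent $\Rightarrow$ is one; if $\Gamma,\Delta'$ are finite multisets of formulas and $S_1,\dots,S_m,T_1,\dots,T_n$ ($m,n\ge0$) are bi-nested sequents then $\Gamma\Rightarrow\Delta',\langle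 S_1\rangle,\dots,\langle S_m\rangle,[T_1],\dots,[T_n]$ is one. $\langle S\rangle$ is an implication block, $[T]$ a modal block; $\Gamma$ is the antecedent, the rest the consequent. Forcing is extended: $x\not\Vdash(\Rightarrow)$; $x\Vdash[T]$ iff $y\Vdash T$ for all $y$ with $xRy$; $x\Vdash\langle T\rangle$ iff $x'\Vdash T$ for all $x'\ge x$; $x\Vdash\Gamma\Rightarrow\Delta$ iff $x\not\Vdash A$ for some $A\in\Gamma$ or $x\Vdash\mathcal{O}$ for some formula or block $\mathcal{O}\in\Delta$. A sequent is valid if it is forced at every world of every bi-relational model. A context $G\{\ \}$ is either the hole $\{\ \}$, or $\Gamma\Rightarrow\Delta,\langle G'\{\ \}\rangle$, or $\Gamma\Rightarrow\Delta,[G'\{\ \}]$ for a sequent $\Gamma\Rightarrow\Delta$ and context $G'\{\ \}$; $G\{S\}$ is the result of filling the hole with $S$. For the consequent $\Delta$ of a sequent, its local positive part $\Delta^*$ is: $\emptyset$ if $\Delta$ contains no modal block; and if $\Delta=\Delta_0,[\Lambda_1\Rightarrow\Theta_1],\dots,[\Lambda_k\Rightarrow\Theta_k]$ with $\Delta_0$ free of modal blocks, then $\Delta^*=[\Lambda_1\Rightarrow\Theta_1^*],\dots,[\Lambda_k\Rightarrow\Theta_k^*]$. The calculus $\mathbf{C}_{\mathbf{IK}}$ (premisses / conclusion; $\Gamma,\Gamma',\Delta,\Sigma,\Pi,\Lambda,\Theta$ multisets): axioms $G\{\Gamma,\bot\Rightarrow\Delta\}$, $G\{\Gamma\Rightarrow\top,\Delta\}$,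 $G\{\Gamma,p\Rightarrow\Delta,p\}$ ($p$ atomic); $(\wedge_L)$ $G\{A,B,\Gamma\Rightarrow\Delta\}$ / $G\{A\wedge B,\Gamma\Rightarrow\Delta\}$; $(\wedge_R)$ $G\{\Gamma\Rightarrow\Delta,A\}$, $G\{\Gamma\Rightarrow\Delta,B\}$ / $G\{\Gamma\Rightarrow\Delta,A\wedge B\}$; $(\vee_L)$ $G\{\Gamma,A\Rightarrow\Delta\}$, $G\{\Gamma,B\Rightarrow\Delta\}$ / $G\{\Gamma,A\vee B\Rightarrow\Delta\}$; $(\vee_R)$ $G\{\Gamma\Rightarrow\Delta,A,B\}$ / $G\{\Gamma\Rightarrow\Delta,A\vee B\}$; $(\supset_L)$ $G\{\Gamma,A\supset B\Rightarrow A,\Delta\}$, $G\{\Gamma,B\Rightarrow\Delta\}$ / $G\{\Gamma,A\supset B\Rightarrow\Delta\}$; $(\supset_R)$ $G\{\Gamma\Rightarrow\Delta,\langle A\Rightarrow B\rangle\}$ / $G\{\Gamma\Rightarrow\Delta,A\supset B\}$; $(\Box_L)$ $G\{\Gamma,\Box A\Rightarrow\Delta,[\Sigma,A\Rightarrow\Pi]\}$ / $G\{\Gamma,\Box A\Rightarrow\Delta,[\Sigma\Rightarrow\Pi]\}$; $(\Box_R)$ $G\{\Gamma\Rightarrow\Delta,\langle\,\Rightarrow[\,\Rightarrow A]\rangle\}$ / $G\{\Gamma\Rightarrow\Delta,\Box A\}$; $(\Diamond_L)$ $G\{\Gamma\Rightarrow\Delta,[A\Rightarrow\,]\}$ / $G\{\Gamma,\Diamond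 A\Rightarrow\Delta\}$; $(\Diamond_R)$ $G\{\Gamma\Rightarrow\Delta,\Diamond A,[\Sigma\Rightarrow\Pi,A]\}$ / $G\{\Gamma\Rightarrow\Delta,\Diamond A,[\Sigma\Rightarrow\Pi]\}$; (trans) $G\{\Gamma,\Gamma'\Rightarrow\Delta,\langle\Gamma',\Sigma\Rightarrow\Pi\rangle\}$ / $G\{\Gamma,\Gamma'\Rightarrow\Delta,\langle\Sigma\Rightarrow\Pi\rangle\}$; $(\mathrm{inter}_{fc})$ $G\{\Gamma\Rightarrow\Delta,\langle\Sigma\Rightarrow\Pi,[\Lambda\Rightarrow\Theta^*]\rangle,[\Lambda\Rightarrow\Theta]\}$ / $G\{\Gamma\Rightarrow\Delta,\langle\Sigma\Rightarrow\Pi\rangle,[\Lambda\Rightarrow\Theta]\}$; $(\mathrm{inter}_{bc})$ $G\{\Gamma\Rightarrow\Delta,[\Lambda\Rightarrow\Theta,\langle\Sigma\Rightarrow\Pi\rangle],\langle\,\Rightarrow[\Sigma\Rightarrow\Pi]\rangle\}$ / $G\{\Gamma\Rightarrow\Delta,[\Lambda\Rightarrow\Theta,\langle\Sigma\Rightarrow\Pi\rangle]\}$. A proof of $S$ is a finite tree of sequents built with these rules, with root $S$ and all leaves axioms; a formula $A$ is provable if $\Rightarrow A$ is. *)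

(* Defs.v *)
From Stdlib Require Import List Permutation.
Import ListNotations.

Definition atom := nat.

Inductive form : Type :=
| Var : atom -> form
| Bot : form
| Top : form
| And : form -> form -> form
| Or  : form -> form -> form
| Imp : form -> form -> form
| Box : form -> form
| Dia : form -> form.

(* The consequent Delta, a multiset of
   formulas, implication blocks <S> and modal blocks [T], is represented by
   three lists: its formulas, the sequents inside its implication blocks and
   the sequents inside its modal blocks.  Multisets are represented by lists;
   the calculus below is closed under permutation (rule [prov_perm]), so list
   order is irrelevant. *)
Inductive bseq : Type :=
| Sq : list form -> list form -> list bseq -> list bseq -> bseq.

Definition empty_seq : bseq := Sq [] [] [] [].

Fixpoint star (s : bseq) : bseq :=
  match s with
  | Sq G _ _ ms => Sq G [] [] (map star ms)
  end.

Inductive ctx : Type :=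
| Hole : ctx
| CImp : list form -> list form -> list bseq -> list bseq -> ctx -> ctx
| CBox : list form -> list form -> list bseq -> list bseq -> ctx -> ctx.

Fixpoint fill (C : ctx) (s : bseq) : bseq :=
  match C with
  | Hole => s
  | CImp G fs is ms C' => Sq G fs (fill C' s :: is) ms
  | CBox G fs is ms C' => Sq G fs is (fill C' s :: ms)
  end.

Inductive provable : bseq -> Prop :=
| prov_perm : forall C G1 f1 i1 m1 G2 f2 i2 m2,
    Permutation G1 G2 -> Permutation f1 f2 ->
    Permutation i1 i2 -> Permutation m1 m2 ->
    provable (fill C (Sq G1 f1 i1 m1)) -> provable (fill C (Sq G2 f2 i2 m2))
| ax_bot : forall C G fs is ms, provable (fill C (Sq (Bot :: G) fs is ms))
| ax_top : forall C G fs is ms, provable (fill C (Sq G (Top :: fs) is ms))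
| ax_id : forall C p G fs is ms,
    provable (fill C (Sq (Var p :: G) (Var p :: fs) is ms))
| andL : forall C A B G fs is ms,
    provable (fill C (Sq (A :: B :: G) fs is ms)) ->
    provable (fill C (Sq (And A B :: G) fs is ms))
| andR : forall C A B G fs is ms,
    provable (fill C (Sq G (A :: fs) is ms)) ->
    provable (fill C (Sq G (B :: fs) is ms)) ->
    provable (fill C (Sq G (And A B :: fs) is ms))
| orL : forall C A B G fs is ms,
    provable (fill C (Sq (A :: G) fs is ms)) ->
    provable (fill C (Sq (B :: G) fs is ms)) ->
    provable (fill C (Sq (Or A B :: G) fs is ms))
| orR : forall C A B G fs is ms,
    provable (fill C (Sq G (A :: B :: fs) is ms)) ->
    provable (fill C (Sq G (Or A B :: fs) is ms))
| impL : forall C A B G fs is ms,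
    provable (fill C (Sq (Imp A B :: G) (A :: fs) is ms)) ->
    provable (fill C (Sq (B :: G) fs is ms)) ->
    provable (fill C (Sq (Imp A B :: G) fs is ms))
| impR : forall C A B G fs is ms,
    provable (fill C (Sq G fs (Sq [A] [B] [] [] :: is) ms)) ->
    provable (fill C (Sq G (Imp A B :: fs) is ms))
| boxL : forall C A G fs is ms S P Pi Pm,
    provable (fill C (Sq (Box A :: G) fs is (Sq (A :: S) P Pi Pm :: ms))) ->
    provable (fill C (Sq (Box A :: G) fs is (Sq S P Pi Pm :: ms)))
| boxR : forall C A G fs is ms,
    provable (fill C (Sq G fs (Sq [] [] [] [Sq [] [A] [] []] :: is) ms)) ->
    provable (fill C (Sq G (Box A :: fs) is ms))
| diaL : forall C A G fs is ms,
    provable (fill C (Sq G fs is (Sq [A] [] [] [] :: ms))) ->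
    provable (fill C (Sq (Dia A :: G) fs is ms))
| diaR : forall C A G fs is ms S P Pi Pm,
    provable (fill C (Sq G (Dia A :: fs) is (Sq S (A :: P) Pi Pm :: ms))) ->
    provable (fill C (Sq G (Dia A :: fs) is (Sq S P Pi Pm :: ms)))
| trans : forall C G G' fs is ms S P Pi Pm,
    provable (fill C (Sq (G ++ G') fs (Sq (G' ++ S) P Pi Pm :: is) ms)) ->
    provable (fill C (Sq (G ++ G') fs (Sq S P Pi Pm :: is) ms))
| inter_fc : forall C G fs is ms S P Pi Pm T,
    provable (fill C (Sq G fs (Sq S P Pi (star T :: Pm) :: is) (T :: ms))) ->
    provable (fill C (Sq G fs (Sq S P Pi Pm :: is) (T :: ms)))
| inter_bc : forall C G fs is ms L Tf Ti Tm U,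
    provable (fill C (Sq G fs (Sq [] [] [] [U] :: is) (Sq L Tf (U :: Ti) Tm :: ms))) ->
    provable (fill C (Sq G fs is (Sq L Tf (U :: Ti) Tm :: ms))).

Record model : Type := {
  W : Type;
  W_inh : inhabited W;
  le : W -> W -> Prop;
  R : W -> W -> Prop;
  V : W -> atom -> Prop;
  le_refl : forall x, le x x;
  le_trans : forall x y z, le x y -> le y z -> le x z;
  V_mono : forall x y p, le x y -> V x p -> V y p;
  FC : forall x x' z, le x x' -> R x z -> exists z', R x' z' /\ le z z';
  BC : forall x z z', R x z -> le z z' -> exists x', le x x' /\ R x' z'
}.

Fixpoint fforces (M : model) (w : W M) (A : form) : Prop :=
  match A with
  | Var p => V M w p
  | Bot => False
  | Top => True
  | And B C => fforces M w B /\ fforces M w C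
  | Or B C => fforces M w B \/ fforces M w C
  | Imp B C => forall w', le M w w' -> fforces M w' B -> fforces M w' C
  | Box B => forall w' v', le M w w' -> R M w' v' -> fforces M v' B
  | Dia B => exists v, R M w v /\ fforces M v B
  end.

Fixpoint forces (M : model) (s : bseq) (x : W M) {struct s} : Prop :=
  match s with
  | Sq G fs is ms =>
      (exists A, In A G /\ ~ fforces M x A)
      \/ (exists A, In A fs /\ fforces M x A)
      \/ (let fix anyI (l : list bseq) : Prop :=
            match l with
            | [] => False
            | T :: l' => (forall x', le M x x' -> forces M T x') \/ anyI l'
            end in anyI is)
      \/ (let fix anyM (l : list bseq) : Prop :=
            match l with
            | [] => False
            | T :: l' => (forall y, R M x y -> forces M T y) \/ anyM l'
            end in anyM ms)
  end.

Definition valid (s : bseq) : Prop := forall (M : model) (w : W M), forces M s w.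

(* Main.v *)
Require Import Defs.
From Stdlib Require Import List Permutation Classical.
Import ListNotations.

Section S.
Variable M : model.

Lemma forces_Sq : forall G fs is ms x, forces M (Sq G fs is ms) x <->
  (exists A, In A G /\ ~ fforces M x A) \/ (exists A, In A fs /\ fforces M x A) \/
  (exists T, In T is /\ forall x', le M x x' -> forces M T x') \/
  (exists T, In T ms /\ forall y, R M x y -> forces M T y).
Proof.
  intros. simpl.
  match goal with |- _ \/ _ \/ ?fi is \/ ?fm ms <-> _ =>
    assert (HI : forall l, fi l <-> exists T, In T l /\ forall x', le M x x' -> forces M T x');
    [ induction l as [|a l IH]; simpl; [firstorder|];
      rewrite IH; split; [intros [H|[T [H1 H2]]]; eauto | intros [T [[<-|H1] H2]]; eauto]
    | assert (HM : forall l, fm l <-> exists T, In T l /\ forall y, R M x y -> forces M T y);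
    [ induction l as [|a l IH]; simpl; [firstorder|];
      rewrite IH; split; [intros [H|[T [H1 H2]]]; eauto | intros [T [[<-|H1] H2]]; eauto]
    | rewrite HI, HM; tauto ] ]
  end.
Qed.

Lemma fforces_mono : forall A x y, le M x y -> fforces M x A -> fforces M y A.
Proof.
  induction A; simpl; intros x y Hle H; try tauto.
  - eapply V_mono; eauto.
  - destruct H; split; eauto.
  - destruct H; [left|right]; eauto.
  - intros w' Hw'; apply H; eapply le_trans; eauto.
  - intros w' v' Hw' Hr; eapply H; [eapply le_trans; eauto | eauto].
  - destruct H as [v [Hr Hv]]. destruct (FC M x y v Hle Hr) as [z [Hz1 Hz2]].
    exists z; split; eauto.
Qed.

End S.

Fixpoint bseq_ind' (P : bseq -> Prop)
  (H : forall G fs is ms, Forall P is -> Forall P ms -> P (Sq G fs is ms)) s : P s :=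
  match s with
  | Sq G fs is ms => H G fs is ms
      ((fix f l := match l return Forall P l with
                   | [] => Forall_nil _
                   | x :: l' => Forall_cons _ (bseq_ind' P H x) (f l') end) is)
      ((fix f l := match l return Forall P l with
                   | [] => Forall_nil _
                   | x :: l' => Forall_cons _ (bseq_ind' P H x) (f l') end) ms)
  end.

Lemma star_down M : forall T y z, le M y z -> forces M (star T) z -> forces M T y.
Proof.
  intro T; induction T as [L fs is ms _ IHm] using bseq_ind'.
  intros y z Hle H. simpl star in H. rewrite forces_Sq in *.
  destruct H as [[A [HA HnA]]|[[A [HA _]]|[[T [HT _]]|[T [HT HTf]]]]].
  - left; exists A; split; auto; intro; apply HnA; eapply fforces_mono; eauto.
  - destruct HA.
  - destruct HT.
  - apply in_map_iff in HT as [T0 [<- HT0]].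
    right; right; right. exists T0; split; auto. intros u Hyu.
    destruct (FC M y z u Hle Hyu) as [u' [Hzu' Huu']].
    rewrite Forall_forall in IHm. eapply IHm; eauto.
Qed.

Lemma ctx0 : forall C M s, (forall x, forces M s x) -> forall x, forces M (fill C s) x.
Proof.
  induction C; simpl fill; intros M s H x; auto; rewrite forces_Sq.
  - right; right; left. exists (fill C s); split; [left; auto|]. intros; apply IHC; auto.
  - right; right; right. exists (fill C s); split; [left; auto|]. intros; apply IHC; auto.
Qed.

Lemma ctx1 : forall C M s1 s2, (forall x, forces M s1 x -> forces M s2 x) ->
  forall x, forces M (fill C s1) x -> forces M (fill C s2) x.
Proof.
  induction C; simpl fill; intros M s1 s2 H x; auto; rewrite !forces_Sq.
  - intros [h|[h|[[T [[<-|HT] HT']]|h]]]; try tauto.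
    + right; right; left. exists (fill C s2); split; [left; auto|]. intros; eapply IHC; eauto.
    + right; right; left. exists T; split; [right; auto|]; auto.
  - intros [h|[h|[h|[T [[<-|HT] HT']]]]]; try tauto.
    + right; right; right. exists (fill C s2); split; [left; auto|]. intros; eapply IHC; eauto.
    + right; right; right. exists T; split; [right; auto|]; auto.
Qed.

Lemma ctx2 : forall C M s1 s2 s3, (forall x, forces M s1 x -> forces M s2 x -> forces M s3 x) ->
  forall x, forces M (fill C s1) x -> forces M (fill C s2) x -> forces M (fill C s3) x.
Proof.
  induction C; simpl fill; intros M s1 s2 s3 H x; auto; rewrite !forces_Sq.
  - intros [h|[h|[[T [[<-|HT] HT']]|h]]]; try tauto;
    [|right; right; left; exists T; split; [right; auto|]; auto].
    intros [h|[h|[[T [[<-|HT] HT2]]|h]]]; try tauto.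
    + right; right; left. exists (fill C s3); split; [left; auto|]. intros; eapply IHC; eauto.
    + right; right; left. exists T; split; [right; auto|]; auto.
  - intros [h|[h|[h|[T [[<-|HT] HT']]]]]; try tauto;
    [|right; right; right; exists T; split; [right; auto|]; auto].
    intros [h|[h|[h|[T [[<-|HT] HT2]]]]]; try tauto.
    + right; right; right. exists (fill C s3); split; [left; auto|]. intros; eapply IHC; eauto.
    + right; right; right. exists T; split; [right; auto|]; auto.
Qed.

Ltac one := intros M w; match goal with IH : forall (M : model) (w : W M), forces M (fill ?C ?s1) w |- _ =>
  apply (ctx1 C M s1); [|apply IH] end; intros x; rewrite !forces_Sq.
Ltac two := intros M w; match goal with IH1 : forall (M : model) (w : W M), forces M (fill ?C ?s1) w,
  IH2 : forall (M : model) (w : W M), forces M (fill ?C ?s2) w |- _ =>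
  apply (ctx2 C M s1 s2); [|apply IH1|apply IH2] end; intros x; rewrite !forces_Sq.

Ltac d4 H := destruct H as [[?A0 [?h1 ?h2]]|[[?A0 [?h1 ?h2]]|[[?T0 [?h1 ?h2]]|[?T0 [?h1 ?h2]]]]].
Ltac inn := simpl In in *.
Ltac fin1 a := solve [ left; exists a; simpl; tauto | right; left; exists a; simpl; tauto
  | right;right;left; exists a; simpl; tauto | right;right;right; exists a; simpl; tauto ].
Ltac fin := first [tauto | match goal with
 | H : In ?a _ |- _ => fin1 a
 | H : _ = ?a \/ In ?a _ |- _ => fin1 a end].

Theorem theorem3p1 : forall s : bseq, provable s -> valid s.
Proof.
  intros s H; induction H; unfold valid in *.
  - one. intros h; d4 h; [left|right;left|right;right;left|right;right;right];
      eexists; split; eauto using Permutation_in.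
  - intros M; apply ctx0; intros x; rewrite forces_Sq; left; exists Bot; simpl; auto.
  - intros M; apply ctx0; intros x; rewrite forces_Sq; right; left; exists Top; simpl; auto.
  - intros M; apply ctx0; intros x; rewrite forces_Sq.
    destruct (classic (V M x p)); [right; left; exists (Var p)|left; exists (Var p)]; simpl; auto.
  - (* andL *) one. intros h; d4 h; inn; try fin.
    destruct h1 as [<-|[<-|h1]].
    + left; exists (And A B); simpl; tauto.
    + left; exists (And A B); simpl; tauto.
    + left; exists A0; simpl; tauto.
  - (* andR *) two. intros h h'.
    destruct h as [h|[[A0 [[<-|h1] h2]]|h]]; try fin.
    destruct h' as [h'|[[B0 [[<-|h1] h2']]|h']]; try fin.
    right; left; exists (And A B); simpl; tauto.
  - (* orL *) two. intros h h'.
    destruct h as [[A0 [[<-|h1] h2]]|h]; try fin.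
    destruct h' as [[B0 [[<-|h1] h2']]|h']; try fin.
    left; exists (Or A B); simpl; tauto.
  - (* orR *) one. intros h; d4 h; inn; try fin.
    destruct h1 as [<-|[<-|h1]].
    + right; left; exists (Or A B); simpl; tauto.
    + right; left; exists (Or A B); simpl; tauto.
    + right; left; exists A0; simpl; tauto.
  - (* impL *) two. intros h h'.
    destruct (classic (fforces M x (Imp A B))) as [HI|HI];
      [|left; exists (Imp A B); simpl; auto].
    d4 h; inn; try fin; destruct h1 as [<-|h1]; try fin.
    assert (HB : fforces M x B) by (apply HI; auto using le_refl).
    d4 h'; inn; try fin; destruct h1 as [<-|h1]; try fin.
  - (* impR *) one. intros h; d4 h; inn; try fin.
    destruct h1 as [<-|h1]; [|right;right;left; exists T0; auto].
    right; left; exists (Imp A B); split; [left; auto|].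
    simpl; intros w' hle hA. specialize (h2 w' hle). rewrite forces_Sq in h2.
    d4 h2; inn; try fin.
    + destruct h1 as [<-|[]]; tauto.
    + destruct h1 as [<-|[]]; tauto.
  - (* boxL *) one. intros h.
    destruct (classic (fforces M x (Box A))) as [HB|HB];
      [|left; exists (Box A); simpl; auto].
    d4 h; inn; try fin; destruct h1 as [<-|h1]; try fin.
    right;right;right; exists (Sq S P Pi Pm); split; [left; auto|].
    intros y Ry; specialize (h2 y Ry); rewrite forces_Sq in *.
    d4 h2; inn; try fin; destruct h1 as [<-|h1]; try fin.
    exfalso; match goal with Hn : ~ fforces _ _ _ |- _ => apply Hn end; simpl in HB; eapply HB; [apply le_refl|eauto].
  - (* boxR *) one. intros h; d4 h; inn; try fin; destruct h1 as [<-|h1]; try fin.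
    right; left; exists (Box A); split; [left; auto|].
    simpl; intros w' v' hle hR. specialize (h2 w' hle). rewrite forces_Sq in h2.
    destruct h2 as [[? [[] _]]|[[? [[] _]]|[[? [[] _]]|[T1 [[<-|[]] hT1]]]]].
    specialize (hT1 v' hR). rewrite forces_Sq in hT1.
    destruct hT1 as [[? [[] _]]|[[? [[<-|[]] hA]]|[[? [[] _]]|[? [[] _]]]]]; auto.
  - (* diaL *) one. intros h; d4 h; inn; try fin; destruct h1 as [<-|h1]; try fin.
    left; exists (Dia A); split; [left; auto|].
    simpl; intros [v [Rv Av]]. specialize (h2 v Rv). rewrite forces_Sq in h2.
    d4 h2; inn; try fin; destruct h1 as [<-|[]]; tauto.
  - (* diaR *) one. intros h.
    destruct (classic (fforces M x (Dia A))) as [HD|HD];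
      [right; left; exists (Dia A); simpl; auto|].
    d4 h; inn; try fin; destruct h1 as [<-|h1]; try fin.
    right;right;right; exists (Sq S P Pi Pm); split; [left; auto|].
    intros y Ry; specialize (h2 y Ry); rewrite forces_Sq in *.
    d4 h2; inn; try fin; destruct h1 as [<-|h1]; try fin.
    exfalso; apply HD; simpl; eauto.
  - (* trans *) one. intros h.
    destruct (classic (exists A0, In A0 (G ++ G') /\ ~ fforces M x A0)) as [HE|HE]; [left; auto|].
    d4 h; inn; try fin; destruct h1 as [<-|h1]; try fin.
    right;right;left; exists (Sq S P Pi Pm); split; [left; auto|].
    intros x' hle; specialize (h2 x' hle); rewrite forces_Sq in *.
    d4 h2; inn; try fin.
    apply in_app_or in h1 as [h1|h1]; [|left; exists A0; auto].
    exfalso; apply h2. eapply fforces_mono; [eauto|].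
    apply NNPP; intro hn; apply HE; exists A0; split; auto; apply in_or_app; auto.
  - (* inter_fc *) one. intros h.
    destruct (classic (forall y, R M x y -> forces M T y)) as [HT|HT];
      [right;right;right; exists T; split; [left|]; auto|].
    apply not_all_ex_not in HT as [y HT].
    assert (Ry : R M x y /\ ~ forces M T y) by tauto. clear HT; destruct Ry as [Ry HT].
    d4 h; inn; try fin; destruct h1 as [<-|h1]; try fin.
    right;right;left; exists (Sq S P Pi Pm); split; [left; auto|].
    intros x' hle; specialize (h2 x' hle); rewrite forces_Sq in *.
    d4 h2; inn; try fin; destruct h1 as [<-|h1]; try fin.
    exfalso. destruct (FC M x x' y hle Ry) as [z [Rz Hyz]].
    apply HT; eapply star_down; eauto.
  - (* inter_bc *) one. intros h; d4 h; inn; try fin; destruct h1 as [<-|h1]; try fin.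
    right;right;right; exists (Sq L Tf (U :: Ti) Tm); split; [left; auto|].
    intros y Ry; rewrite forces_Sq; right;right;left; exists U; split; [left; auto|].
    intros y' hle. destruct (BC M x y y' Ry hle) as [x' [hx' Rx']].
    specialize (h2 x' hx'); rewrite forces_Sq in h2.
    d4 h2; inn; try fin; destruct h1 as [<-|[]]; auto.
Qed.
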